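(* Let $L^\bullet$ be a generalized operator algebra with the block-matrix property and let $$\mathfrak A_{\mathfrak P}:0\to H(g^0;P_0)\xrightarrow{A_0}H(g^1;P_1)\xrightarrow{A_1}H(g^2;P_2)\to\cdots$$ be a complex with $A_j\in T^0((g^j,g^{j+1});P_j,P_{j+1})$, $j\ge0$. Let $\mathfrak A^\wedge_{\mathfrak P}$ be its lift. Then $$\ker A_{[j]}=\ker\big(A_j:H(g^j,P_j)\to H(g^{j+1},P_{j+1})\big)\oplus\ker P_{j-1}\oplus\mathrm{im}\,P_{j-2}\oplus\ker P_{j-3}\oplus\cdots,$$ $$\mathrm{im}\,A_{[j]}=\mathrm{im}\big(A_j:H(g^j,P_j)\to H(g^{j+1},P_{j+1})\big)\oplus\ker P_j\oplus\mathrm{im}\,P_{j-1}\oplus\ker P_{j-2}\oplus\cdots,$$ (images and kernels of $P_k$ taken in $H(g^k)$); consequently $\mathcal H_j(\mathfrak A_{\mathfrak P})\cong\mathcal H_j(\mathfrak A^\wedge_{\mathfrak P})$ for all $j\ge0$, and $\mathfrak A_{\mathfrak P}$ is Fredholm (resp. exact) iff $\mathfrak A^\wedge_{\mathfrak P}$ is Fredholm (resp. exact).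
   Context: Generalized operator algebra $L^\bullet$: weights $g\in G$ with Hilbert spaces $H(g)$, spaces $L^{-\infty}((g^0,g^1))\subset L^0((g^0,g^1))\subset\mathcal L(H(g^0),H(g^1))$ closed under composition and adjoints, containing identities, smoothing operators compact. Block-matrix property: there is an associative map $(g^0,g^1)\mapsto g^0\oplus g^1$ on $G$ with $H(g^0\oplus g^1)=H(g^0)\oplus H(g^1)$ such that $L^\mu$ of pairs of direct sums is identified with block matrices whose entries lie in $L^\mu$ of the corresponding pairs. For projections $P_j\in L^0((g^j,g^j))$, $H(g,P):=P(H(g))$ and $T^\mu((g^0,g^1);P_0,P_1)=\{A\in L^\mu((g^0,g^1)):(1-P_1)A=0,\ A(1-P_0)=0\}$. Lift: $g^{[j]}:=g^j\oplus g^{j-1}\oplus\cdots\oplus g^0$ and $A_{[j]}\in L^0((g^{[j]},g^{[j+1]}))$, $A_{[j]}(u_j,u_{j-1},\dots,u_0)=(A_ju_j,(1-P_j)u_j,P_{j-1}u_{j-1},(1-P_{j-2})u_{j-2},P_{j-3}u_{j-3},\dots)$; then $A_{[j+1]}A_{[j]}=0$ and $\mathfrak A^\wedge_{\mathfrak P}:0\to H(g^{[0]})\xrightarrow{A_{[0]}}H(g^{[1]})\xrightarrow{A_{[1]}}\cdots$ is the lift. $\mathcal H_j$ denotes cohomology $\ker/\mathrm{im}$. *)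

(* Defs.v *)
From HB Require Import structures.
From mathcomp Require Import all_boot all_order all_algebra.
Set Implicit Arguments. Unset Strict Implicit. Unset Printing Implicit Defensive.
Import GRing.Theory.
Local Open Scope ring_scope.

Section Lift.
Variables (K : fieldType) (V : nat -> lmodType K).
Variables (P : forall j, {linear V j -> V j}) (A : forall j, {linear V j -> V j.+1}).

(* H(g^[j]) = H(g^j) (+) H(g^(j-1)) (+) ... (+) H(g^0), as nested products
   (u_j, (u_(j-1), ( ... , u_0))). *)
Fixpoint Wsp (j : nat) : lmodType K :=
  match j with
  | 0 => V 0
  | j'.+1 => ((V j'.+1) * (Wsp j'))%type : lmodType K
  end.

Fixpoint whead (j : nat) : Wsp j -> V j :=
  match j as n return Wsp n -> V n with
  | 0 => fun x => x
  | j'.+1 => fun x => x.1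
  end.

Fixpoint altop (b : bool) (j : nat) : Wsp j -> Wsp j :=
  match j as n return Wsp n -> Wsp n with
  | 0 => fun x => if b then x - P 0 x else P 0 x
  | j'.+1 => fun x => (if b then x.1 - P j'.+1 x.1 else P j'.+1 x.1,
                       altop (~~ b) x.2)
  end.

(* The lifted operator A_[j] : H(g^[j]) -> H(g^[j+1]),
   A_[j](u_j,...,u_0) = (A_j u_j, (1-P_j)u_j, P_(j-1)u_(j-1), (1-P_(j-2))u_(j-2), ...) *)
Definition Alift (j : nat) : Wsp j -> Wsp j.+1 :=
  fun x => (A j (whead x), altop true x).

Fixpoint altsp (b : bool) (j : nat) : Wsp j -> Prop :=
  match j as n return Wsp n -> Prop with
  | 0 => fun x => if b then P 0 x = 0 else exists w, x = P 0 w
  | j'.+1 => fun x => (if b then P j'.+1 x.1 = 0 else exists w, x.1 = P j'.+1 w)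
                      /\ altsp (~~ b) x.2
  end.

Definition inHP (j : nat) (u : V j) : Prop := exists w, u = P j w.

Definition kerAP (j : nat) (u : V j) : Prop := inHP u /\ A j u = 0.

Definition imAP (j : nat) (y : V j.+1) : Prop := exists v, inHP v /\ y = A j v.

Definition kerDesc (j : nat) : Wsp j -> Prop :=
  match j as n return Wsp n -> Prop with
  | 0 => fun x => kerAP x
  | j'.+1 => fun x => kerAP x.1 /\ altsp true x.2
  end.

Definition imDesc (j : nat) (y : Wsp j.+1) : Prop :=
  imAP y.1 /\ altsp true y.2.

Definition origZ (j : nat) : V j -> Prop := @kerAP j.
Definition origB (j : nat) : V j -> Prop :=
  match j as n return V n -> Prop with
  | 0 => fun x => x = 0
  | j'.+1 => fun x => imAP x
  end.

Definition liftZ (j : nat) (x : Wsp j) : Prop := Alift x = 0.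
Definition liftB (j : nat) : Wsp j -> Prop :=
  match j as n return Wsp n -> Prop with
  | 0 => fun x => x = 0
  | j'.+1 => fun x => exists x', x = Alift x'
  end.

End Lift.

(* Z1/B1 ~= Z2/B2 as vector spaces, via a linear map f inducing a
   well-defined bijection of the quotients. *)
Definition subquot_iso (K : fieldType) (U1 U2 : lmodType K)
  (Z1 B1 : U1 -> Prop) (Z2 B2 : U2 -> Prop) : Prop :=
  exists f : {linear U1 -> U2},
    (forall x, Z1 x -> Z2 (f x)) /\
    (forall x, B1 x -> B2 (f x)) /\
    (forall x, Z1 x -> B2 (f x) -> B1 x) /\
    (forall y, Z2 y -> exists2 x, Z1 x & B2 (y - f x)).

Definition subquot_findim (K : fieldType) (U : lmodType K)
  (Z B : U -> Prop) : Prop :=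
  exists s : seq U, forall z, Z z ->
    exists c : 'I_(size s) -> K, B (z - \sum_(i < size s) c i *: s`_i).

Definition subquot_trivial (K : fieldType) (U : lmodType K)
  (Z B : U -> Prop) : Prop := forall z, Z z -> B z.

(* Main.v *)
Require Import Defs.
From HB Require Import structures.
From mathcomp Require Import all_boot all_order all_algebra.
Import GRing.Theory.
Local Open Scope ring_scope.
Set Implicit Arguments. Unset Strict Implicit.

Section Aux.
Variables (K : fieldType) (V : nat -> lmodType K).
Variables (P : forall j, {linear V j -> V j}) (A : forall j, {linear V j -> V j.+1}).
Hypothesis hP : forall j (u : V j), P j (P j u) = P j u.
Hypothesis hAr : forall j (u : V j), A j (u - P j u) = 0.

Lemma AP j (u : V j) : A j u = A j (P j u).
Proof. by apply/eqP; rewrite -subr_eq0 -linearB hAr. Qed.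

Lemma altopD b j (x y : Wsp V j) : altop P b (x + y) = altop P b x + altop P b y.
Proof.
elim: j b x y => [|j IH] b x y /=.
  by case: b; rewrite linearD // opprD addrACA.
congr (_, _); last exact: IH.
by case: b; rewrite /= linearD // opprD addrACA.
Qed.

Lemma altop_zero b j (x : Wsp V j) : altop P b x = 0 <-> altsp P (~~ b) x.
Proof.
elim: j b x => [|j IH] b x /=.
  case: b => /=; split.
  - by move/eqP; rewrite subr_eq0 => /eqP ->; exists x.
  - by case=> w ->; rewrite hP subrr.
  - by [].
  - by [].
have := IH (~~ b) x.2; rewrite negbK => IH'.
case: b IH' => /= IH'; split.
- case=> /eqP; rewrite subr_eq0 => /eqP h1 /IH' h2; split=> //; by exists x.1.
- case=> -[w h1] /IH' h2; congr (_, _) => //; by rewrite h1 hP subrr.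
- by case=> h1 /IH' h2.
- by case=> h1 /IH' h2; congr (_, _).
Qed.

Lemma altsp_fix b j (x : Wsp V j) : altsp P b x -> altop P b x = x.
Proof.
elim: j b x => [|j IH] b x /=.
  by case: b => /= [->|[w ->]]; rewrite ?subr0 ?hP.
case=> h1 h2; rewrite IH //; case: x h1 h2 => x1 x2 /= h1 h2.
by case: b h1 h2 => /= [->|[w ->]]; rewrite ?subr0 ?hP.
Qed.

Lemma altsp_altop b j (x : Wsp V j) : altsp P b (altop P b x).
Proof.
elim: j b x => [|j IH] b x /=.
  by case: b => /=; [rewrite linearB hP subrr | exists x].
split; last exact: IH.
by case: b => /=; [rewrite linearB hP subrr | exists x.1].
Qed.

Lemma altsp0 b j : altsp P b (0 : Wsp V j).
Proof.
elim: j b => [|j IH] b /=.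
  by case: b => /=; [rewrite linear0 | exists 0; rewrite linear0].
split; last exact: IH.
by case: b => /=; [rewrite linear0 | exists 0; rewrite linear0].
Qed.


Lemma part1 j (x : Wsp V j) : Alift P A x = 0 <-> kerDesc P A x.
Proof.
rewrite /Alift; split.
  case=> h1 h2; have {h2} /= h2 := proj1 (altop_zero true x) h2; case: j x h1 h2 => [|j] x /= h1 h2.
    by split.
  by case: h2 => h2 h3; split => //; split.
case: j x => [|j] x /=.
  by case=> h1 h2; congr (_, _) => //; apply: (proj2 (altop_zero true x)).
case=> -[h1 h2] h3; congr (_, _) => //; apply: (proj2 (altop_zero true x)) => /=; by split.
Qed.

Lemma part2 j (y : Wsp V j.+1) : (exists x : Wsp V j, y = Alift P A x) <-> imDesc P A y.
Proof.
split.
  case=> x ->; split; last exact: altsp_altop.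
  exists (P j (whead x)); split; first by exists (whead x).
  exact: AP.
case: y => y1 y2; rewrite /imDesc /=; case=> -[v [[w hv] ->]] h2 {y1}.
have Pv : P j v = v by rewrite hv hP.
case: j v w hv Pv y2 h2 => [|j] v w hv Pv y2 h2 /=.
  exists (v + y2); rewrite /Alift /=.
  have At : A 0 y2 = 0 by rewrite AP h2 linear0.
  by rewrite linearD At addr0 linearD Pv h2 addr0 [v + _]addrC addrK.
case: y2 h2 => t y3 /= [h2 h3].
exists (v + t, y3); rewrite /Alift /=.
have At : A j.+1 t = 0 by rewrite AP h2 linear0.
by rewrite linearD At addr0 linearD Pv h2 addr0 [v + _]addrC addrK altsp_fix.
Qed.

End Aux.

Definition emb (K : fieldType) (V : nat -> lmodType K) j : V j -> Wsp V j :=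
  match j return V j -> Wsp V j with 0 => fun u => u | j'.+1 => fun u => (u, 0) end.

Lemma emb_lin (K : fieldType) (V : nat -> lmodType K) j : linear (@emb K V j).
Proof. case: j => [|j] a u v //=. apply: injective_projections => //=. by rewrite scaler0 addr0. Qed.

HB.instance Definition _ (K : fieldType) (V : nat -> lmodType K) j :=
  GRing.isLinear.Build K (V j) (Wsp V j) *:%R (@emb K V j) (@emb_lin K V j).

Lemma whead_lin (K : fieldType) (V : nat -> lmodType K) j : linear (@whead K V j).
Proof. by case: j. Qed.

HB.instance Definition _ (K : fieldType) (V : nat -> lmodType K) j :=
  GRing.isLinear.Build K (Wsp V j) (V j) *:%R (@whead K V j) (@whead_lin K V j).

Definition findimN (K : fieldType) (U : lmodType K) (Z B : U -> Prop) : Prop :=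
  exists s : seq U, forall z, Z z ->
    exists c : nat -> K, B (z - \sum_(i < size s) c i *: s`_i).

Lemma findimE (K : fieldType) (U : lmodType K) (Z B : U -> Prop) :
  subquot_findim Z B <-> findimN Z B.
Proof.
split=> -[s hs]; exists s => z /hs [c hc].
  exists (fun k => oapp c 0 (insub k)).
  by rewrite (eq_bigr (fun i => c i *: s`_i)) // => i _; rewrite valK.
by exists (fun i => c i).
Qed.

Lemma sum_map (K : fieldType) (U1 U2 : lmodType K) (f : {linear U1 -> U2})
  (s : seq U1) (c : nat -> K) :
  \sum_(i < size (map f s)) c i *: (map f s)`_i = f (\sum_(i < size s) c i *: s`_i).
Proof.
rewrite linear_sum /=.
rewrite size_map; apply: eq_bigr => i _.
by rewrite (nth_map 0) // linearZ.
Qed.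

Lemma transfer (K : fieldType) (U1 U2 : lmodType K) (Z1 B1 : U1 -> Prop)
  (Z2 B2 : U2 -> Prop) (f : {linear U1 -> U2}) (g : {linear U2 -> U1}) :
  (forall x, Z1 x -> Z2 (f x)) -> (forall x, B1 x -> B2 (f x)) ->
  (forall y, B2 y -> B1 (g y)) -> (forall x, g (f x) = x) ->
  (forall y1 y2, B2 y1 -> B2 y2 -> B2 (y1 + y2)) ->
  (forall y, Z2 y -> exists2 x, Z1 x & B2 (y - f x)) ->
  subquot_iso Z1 B1 Z2 B2 /\
  (subquot_findim Z1 B1 <-> subquot_findim Z2 B2) /\
  (subquot_trivial Z1 B1 <-> subquot_trivial Z2 B2).
Proof.
move=> hZ hB hg hgf hadd h4; split.
  exists f; do !split => //.
  by move=> x _ /hg; rewrite hgf.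
split; last first.
  split=> ht.
    move=> y /h4 [x /ht /hB hx hy].
    by have := hadd _ _ hy hx; rewrite subrK.
  by move=> z /hZ /ht /hg; rewrite hgf.
split=> /findimE [s hs]; apply/findimE.
  exists (map f s) => y /h4 [x /hs [c hc] hy]; exists c.
  rewrite sum_map.
  have := hadd _ _ hy (hB _ hc); rewrite linearB addrA subrK //.
exists (map g s) => z /hZ /hs [c hc]; exists c.
by rewrite sum_map; have := hg _ hc; rewrite linearB hgf.
Qed.

Theorem mainTheorem13 (K : fieldType) (V : nat -> lmodType K)
  (P : forall j, {linear V j -> V j})
  (A : forall j, {linear V j -> V j.+1})
  (* P_j are projections *)
  (hP : forall j (u : V j), P j (P j u) = P j u)
  (* A_j in T^0((g^j,g^(j+1)); P_j, P_(j+1)) *)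
  (hAl : forall j (u : V j), A j u - P j.+1 (A j u) = 0)
  (hAr : forall j (u : V j), A j (u - P j u) = 0)
  (* A_P is a complex on the spaces H(g^j, P_j) *)
  (hcx : forall j (u : V j), inHP P u -> A j.+1 (A j u) = 0) :
  (forall j (x : Wsp V j), Alift P A x = 0 <-> kerDesc P A x) /\
  (forall j (y : Wsp V j.+1), (exists x : Wsp V j, y = Alift P A x) <-> imDesc P A y) /\
  (forall j, subquot_iso (origZ P A (j:=j)) (origB P A (j:=j))
                         (liftZ P A (j:=j)) (liftB P A (j:=j))) /\
  ((forall j, subquot_findim (origZ P A (j:=j)) (origB P A (j:=j))) <->
   (forall j, subquot_findim (liftZ P A (j:=j)) (liftB P A (j:=j)))) /\
  ((forall j, subquot_trivial (origZ P A (j:=j)) (origB P A (j:=j))) <->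
   (forall j, subquot_trivial (liftZ P A (j:=j)) (liftB P A (j:=j)))).
Proof.
have p1 := @part1 K V P A hP; have p2 := @part2 K V P A hP hAr.
have T : forall j, subquot_iso (origZ P A (j:=j)) (origB P A (j:=j))
                         (liftZ P A (j:=j)) (liftB P A (j:=j)) /\
  (subquot_findim (origZ P A (j:=j)) (origB P A (j:=j)) <->
   subquot_findim (liftZ P A (j:=j)) (liftB P A (j:=j))) /\
  (subquot_trivial (origZ P A (j:=j)) (origB P A (j:=j)) <->
   subquot_trivial (liftZ P A (j:=j)) (liftB P A (j:=j))).
  move=> j; apply: (@transfer K _ _ _ _ _ _ (@emb K V j) (@whead K V j)).
  - move=> x hx; apply/p1; case: j x hx => [|j] x hx //=.
    by split=> //; apply: altsp0.
  - case: j => [|j] x /=; first by move=> ->; rewrite ?linear0.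
    by move=> hx; apply/p2; split=> //; apply: altsp0.
  - case: j => [|j] y /=; first by move=> ->; rewrite ?linear0.
    case=> x -> /=; exists (P j (whead x)); split; first by exists (whead x).
    exact: (AP hAr).
  - by case: j.
  - case: j => [|j] y1 y2 /=; first by move=> -> ->; rewrite addr0.
    case=> x1 -> [x2 ->]; exists (x1 + x2).
    by rewrite /Alift linearD linearD altopD.
  - move=> y /p1 hy; exists (whead y); case: j y hy => [|j] y hy //=.
      by case: hy.
      by rewrite subrr.
    case: hy => hy1 hy2; apply/p2; split.
      by exists 0; split; [exists 0; rewrite linear0 | rewrite /= subrr !linear0].
    by rewrite /= subr0.
split=> //; split=> //; split; first by move=> j; case: (T j).
split; split=> h j; have [_ [[T1 T2] [T3 T4]]] := T j; auto.
Qed.
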